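(* Let $q\ge 2$ and $L\ge 2$ be integers and let $\mathcal{C}\subseteq[q]^n$ be a $q$-ary code. Suppose that for every subset $\{c_1,\dots,c_L\}$ of $L$ distinct codewords of $\mathcal{C}$, the average pairwise relative Hamming distance $\binom{L}{2}^{-1}\sum_{1\le i<j\le L}\delta(c_i,c_j)$ is at least $\delta$. Then $\mathcal{C}$ is $(J_q(\delta-\delta/L),\,L-1)$-list decodable.
   Context: $[q]=\{0,1,\dots,q-1\}$. For $x,y\in[q]^n$, $\delta(x,y)$ is the fraction of coordinates $i$ with $x_i\ne y_i$. A code $\mathcal{C}\subseteq[q]^n$ is $(\rho,\ell)$-list decodable if for every $y\in[q]^n$ the number of $c\in\mathcal{C}$ with $\delta(c,y)<\rho$ is at most $\ell$. The Johnson radius function $J_q:[0,1-1/q]\to[0,1]$ is $J_q(x)=\frac{q-1}{q}\Big(1-\sqrt{1-\frac{qx}{q-1}}\Big)$. *)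

(* Defs.v *)
From HB Require Import structures.
From mathcomp Require Import all_boot all_order all_algebra.
Set Implicit Arguments. Unset Strict Implicit. Unset Printing Implicit Defensive.
Import Order.TTheory GRing.Theory Num.Theory.
Local Open Scope ring_scope.

Definition word (q n : nat) := {ffun 'I_n -> 'I_q}.

Definition reldist (R : numFieldType) (q n : nat) (x y : word q n) : R :=
  (#|[set i : 'I_n | x i != y i]|)%:R / n%:R.

Definition list_decodable (R : numFieldType) (q n : nat)
  (C : {set word q n}) (rho : R) (ell : nat) : Prop :=
  forall y : word q n, (#|[set c in C | (reldist R c y < rho)%R]| <= ell)%N.

Definition Johnson (R : rcfType) (q : nat) (x : R) : R :=
  (q%:R - 1) / q%:R * (1 - Num.sqrt (1 - q%:R * x / (q%:R - 1))).

(* Main.v *)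
Require Import Defs.
From mathcomp Require Import all_boot all_order all_algebra.
From mathcomp Require Import lra ring zify.
Import Order.TTheory GRing.Theory Num.Theory.
Local Open Scope ring_scope.

Lemma johnson_contra (R : rcfType) (q : nat) (x e : R) : (2 <= q)%N ->
  0 <= e -> e < Johnson q x -> x <= 2 * e - q%:R * e ^+ 2 / (q%:R - 1) -> False.
Proof.
move=> hq he0 heJ hx.
have hQ : 1 < q%:R :> R by rewrite ltr1n.
have hQ1 : 0 < q%:R - 1 :> R by rewrite subr_gt0.
set p := q%:R / (q%:R - 1) : R.
have hp : 0 < p by rewrite /p divr_gt0 // (lt_trans ltr01).
have e1 : (q%:R - 1) / q%:R = p^-1 by rewrite /p invf_div.
have e2 : q%:R * x / (q%:R - 1) = p * x by rewrite /p mulrAC.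
have e3 : q%:R * e ^+ 2 / (q%:R - 1) = p * e ^+ 2 by rewrite /p mulrAC.
move: heJ hx; rewrite /Johnson e1 e2 e3.
set s := Num.sqrt _ => heJ hx.
have hs0 : 0 <= s := sqrtr_ge0 _.
have hpe : p * e < 1 - s.
  have -> : 1 - s = p * (p^-1 * (1 - s)) by rewrite mulrA mulfV ?mul1r // gt_eqF.
  by rewrite ltr_pM2l.
have hx' : p * x <= 2 * (p * e) - (p * e) ^+ 2.
  have h := ler_wpM2l (ltW hp) hx.
  by apply: (le_trans h); rewrite le_eqVlt; apply/orP; left; apply/eqP; ring.
case: (lerP 0 (1 - p * x)) => ha.
- have hs2 : s ^+ 2 = 1 - p * x by rewrite sqr_sqrtr.
  nra.
- have hs : s = 0 by rewrite /s ltr0_sqrtr.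
  nra.
Qed.

Lemma card_sumr (R : numFieldType) (T : finType) (P : pred T) :
  (#|[set k | P k]|)%:R = \sum_k (P k)%:R :> R.
Proof.
rewrite -sum1_card natr_sum big_mkcond /=; apply: eq_bigr => k _.
by rewrite inE; case: (P k).
Qed.

Lemma sum_ind (R : numFieldType) (T : finType) (x : T) (F : T -> R) :
  \sum_a (x == a)%:R * F a = F x.
Proof.
rewrite (bigD1 x) //= eqxx mul1r big1 ?addr0 // => a hax.
by rewrite eq_sym (negbTE hax) mul0r.
Qed.

Lemma sum_sym (R : numFieldType) (L : nat) (f : 'I_L -> 'I_L -> R) :
  (forall i j, f i j = f j i) -> (forall i, f i i = 0) ->
  \sum_i \sum_j f i j = 2 * \sum_(i < L) \sum_(j < L | (i < j)%N) f i j.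
Proof.
move=> hs hd.
have h1 : forall i j : 'I_L, f i j = (if (i < j)%N then f i j else 0)
                          + (if (j < i)%N then f i j else 0).
  move=> i j; case: (ltngtP i j) => [h|h|h]; rewrite ?addr0 ?add0r //.
  by have -> : i = j by apply: val_inj. 
rewrite (eq_bigr (fun i : 'I_L => \sum_(j : 'I_L) ((if (i < j)%N then f i j else 0)
                          + (if (j < i)%N then f i j else 0)))); last first.
  by move=> i _; apply: eq_bigr => j _; rewrite -h1.
rewrite (eq_bigr (fun i : 'I_L => \sum_(j : 'I_L) (if (i < j)%N then f i j else 0)
        + \sum_(j : 'I_L) (if (j < i)%N then f i j else 0))); last by move=> i _; rewrite big_split.
rewrite big_split /= [X in _ + X = _]exchange_big /=.
have -> : \sum_(j : 'I_L) \sum_(i : 'I_L) (if (j < i)%N then f i j else 0)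
          = \sum_(j : 'I_L) \sum_(i : 'I_L) (if (j < i)%N then f j i else 0).
  by apply: eq_bigr => j _; apply: eq_bigr => i _; rewrite hs.
rewrite mulr_natl mulr2n.
have E : \sum_(i<L) \sum_(j<L) (if (i<j)%N then f i j else 0)
   = \sum_(i < L) \sum_(j < L | (i < j)%N) f i j.
  by apply: eq_bigr => i _; rewrite [RHS]big_mkcond.
by rewrite E.
Qed.



Lemma perk (R : realFieldType) (q L : nat) (f : 'I_L -> 'I_q) (y0 : 'I_q) (tau sig : R) :
  (0 < q)%N ->
  2 * \sum_i (if f i == y0 then tau else sig) - (tau ^+ 2 + (q%:R - 1) * sig ^+ 2)
  <= \sum_i \sum_j (f i == f j)%:R.
Proof.
move=> hq.
pose w a := if a == y0 then tau else sig.
pose m a := \sum_i (f i == a)%:R :> R.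
have E1 : \sum_i \sum_j (f i == f j)%:R = \sum_a m a ^+ 2.
  rewrite (eq_bigr (fun a => \sum_i \sum_j (f i == a)%:R * (f j == a)%:R)); last first.
    move=> a _; rewrite expr2 /m mulr_suml; apply: eq_bigr => i _.
    by rewrite mulr_sumr.
  rewrite [RHS]exchange_big /=; apply: eq_bigr => i _.
  rewrite [RHS]exchange_big /=; apply: eq_bigr => j _.
  rewrite (eq_bigr (fun a => (f i == a)%:R * (f j == a)%:R)) //.
  by rewrite sum_ind eq_sym.
have E2 : \sum_i w (f i) = \sum_a w a * m a.
  rewrite (eq_bigr (fun a => \sum_i (f i == a)%:R * w a)); last first.
    by move=> a _; rewrite /m mulr_sumr; apply: eq_bigr => i _; rewrite mulrC.
  by rewrite exchange_big /=; apply: eq_bigr => i _; rewrite sum_ind.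
have E3 : \sum_a w a ^+ 2 = tau ^+ 2 + (q%:R - 1) * sig ^+ 2.
  rewrite (bigD1 y0) //= /w eqxx; congr (_ + _).
  rewrite (eq_bigr (fun _ => sig ^+ 2)); last by move=> a /negbTE ->.
  rewrite sumr_const cardC1 card_ord -[in RHS](prednK hq) -natr1 addrK.
  by rewrite mulr_natl.
rewrite E1 -E3 (_ : \sum_i _ = \sum_i w (f i)) // E2.
rewrite mulr_sumr -sumrB; apply: ler_sum => a _.
by have := sqr_ge0 (m a - w a); nra.
Qed.

Theorem theorem2p3 (R : rcfType) (q L n : nat) (C : {set word q n}) (delta : R) :
  (2 <= q)%N -> (2 <= L)%N ->
  (forall c : 'I_L -> word q n, injective c -> (forall i, c i \in C) ->
     delta <= (\sum_(i < L) \sum_(j < L | (i < j)%N) reldist R (c i) (c j))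
              / ('C(L, 2))%:R) ->
  list_decodable C (Johnson q (delta - delta / L%:R)) L.-1.
Proof.
move=> hq hL hyp y.
set J := Johnson q _.
set B := [set c in C | reldist R c y < J].
rewrite leqNgt; apply/negP => hB.
have hLB : (L <= #|B|)%N by move: hB hL; lia.
pose c (i : 'I_L) : word q n := enum_val (widen_ord hLB i).
have hcinj : injective c by move=> i j /enum_val_inj /(congr1 val) /= /val_inj.
have hcB : forall i, c i \in C /\ reldist R (c i) y < J.
  by move=> i; have := enum_valP (widen_ord hLB i); rewrite inE => /andP.
have hn : (0 < n)%N.
  rewrite lt0n; apply/negP => /eqP n0.
  have h01 : c (Ordinal (ltnW hL)) = c (Ordinal hL).
    by apply/ffunP => -[kk hk]; exfalso; move: hk; rewrite n0.
  by have := congr1 val (hcinj _ _ h01).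

have hC i : c i \in C by case: (hcB i).
have hJ i : reldist R (c i) y < J by case: (hcB i).
have hyp' := hyp c hcinj hC.
move: hyp'; clear hyp hB.
set N : R := n%:R; set Lr : R := L%:R; set Q : R := q%:R.
have hN : 0 < N by rewrite ltr0n.
have hLr : 1 < Lr by rewrite ltr1n.
have hQ : 1 < Q by rewrite ltr1n.
have hrd : forall u v : word q n, reldist R u v = (\sum_k (u k != v k)%:R) / N.
  by move=> u v; rewrite /reldist card_sumr.
pose dy i := \sum_k (c i k != y k)%:R :> R.
set D := \sum_i dy i.
pose e := D / (N * Lr).
have he0 : 0 <= e.
  rewrite /e divr_ge0 ?mulr_ge0 ?ler0n // sumr_ge0 // => i _.
  by rewrite sumr_ge0.
have heJ : e < J.
  have i0 : 'I_L := Ordinal (ltnW hL).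
  have h1 : \sum_i reldist R (c i) y < \sum_(i < L) J.
    rewrite (bigD1 i0) //= [X in _ < X](bigD1 i0) //=.
    by rewrite ltr_leD // ler_sum // => i _; apply: ltW.
  move: h1; rewrite sumr_const card_ord -mulr_natl.
  rewrite (eq_bigr (fun i => dy i / N)); last by move=> i _; rewrite hrd.
  rewrite -mulr_suml -/D => h1.
  rewrite /e invfM mulrA ltr_pdivrMr ?(lt_trans ltr01) //.
  by move: h1; rewrite -/Lr => h1; nra.

have hQ1 : 0 < Q - 1 by rewrite subr_gt0.
set tau := Lr * (1 - e).
set sig := Lr * e / (Q - 1).
set W := tau ^+ 2 + (Q - 1) * sig ^+ 2.
have hw : forall i, \sum_k (if c i k == y k then tau else sig)
                    = N * tau - dy i * (tau - sig).
  move=> i; rewrite /dy mulr_suml.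
  rewrite (eq_bigr (fun k => tau - (c i k != y k)%:R * (tau - sig))); last first.
    by move=> k _; case: (c i k == y k) => /=; ring.
  by rewrite sumrB sumr_const card_ord -mulr_natl.
have E1 : \sum_k \sum_i (if c i k == y k then tau else sig)
          = Lr * N * tau - D * (tau - sig).
  rewrite exchange_big /= (eq_bigr _ (fun i _ => hw i)) sumrB sumr_const card_ord.
  by rewrite -mulr_suml -/D -mulr_natl mulrA.
have E2 : \sum_k \sum_i \sum_j (c i k == c j k)%:R
          = \sum_i \sum_j \sum_k (c i k == c j k)%:R :> R.
  rewrite exchange_big /=; apply: eq_bigr => i _.
  by rewrite exchange_big.
have K : 2 * (Lr * N * tau - D * (tau - sig)) - N * W
         <= \sum_i \sum_j \sum_k (c i k == c j k)%:R.
  have h : \sum_k (2 * \sum_i (if c i k == y k then tau else sig) - W)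
           <= \sum_k \sum_i \sum_j (c i k == c j k)%:R.
    apply: ler_sum => k _; apply: (@perk R q L (fun i => c i k) (y k) tau sig).
    by apply: ltnW.
  move: h; rewrite sumrB -mulr_sumr E1 E2 sumr_const card_ord.
  by rewrite -[W *+ n]mulr_natl.
have e1 : forall i j k, (c i k != c j k)%:R = 1 - (c i k == c j k)%:R :> R.
  by move=> i j k; case: (_ == _) => /=; ring.
have hP : \sum_i \sum_j \sum_k (c i k != c j k)%:R
          = Lr * Lr * N - \sum_i \sum_j \sum_k (c i k == c j k)%:R :> R.
  under eq_bigr => i _ do under eq_bigr => j _ do
    rewrite (eq_bigr _ (fun k _ => e1 i j k)) sumrB sumr_const card_ord.
  under eq_bigr => i _ do rewrite sumrB sumr_const card_ord.
  by rewrite sumrB sumr_const card_ord -[n%:R *+ L]mulr_natl -[(_ * _) *+ L]mulr_natl mulrA.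
have hS : 2 * (\sum_(i < L) \sum_(j < L | (i < j)%N) reldist R (c i) (c j))
          = (\sum_i \sum_j \sum_k (c i k != c j k)%:R) / N.
  rewrite -sum_sym; last first.
  - by move=> i; rewrite hrd big1 ?mul0r // => k _; rewrite eqxx.
  - move=> i j; rewrite !hrd; congr (_ / _); apply: eq_bigr => k _.
    by rewrite eq_sym.
  rewrite mulr_suml; apply: eq_bigr => i _; rewrite mulr_suml.
  by apply: eq_bigr => j _; rewrite hrd.
have hCb : 2 * ('C(L, 2))%:R = (Lr - 1) * Lr.
  by rewrite -natrM (mul_bin_left L 1) bin1 natrM natrB //; apply: ltnW.
have hCb0 : 0 < ('C(L, 2))%:R :> R.
  by rewrite ltr0n bin_gt0.
have De : D = e * (N * Lr).
  by rewrite /e mulfVK // mulf_neq0 // gt_eqF // (lt_trans ltr01).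
move=> hyp'.
apply: (@johnson_contra R q _ e hq he0 heJ).
rewrite -/Q -/Lr.
move: hyp' hS hP K.
set S := \sum_(i < L) _.
set P := \sum_i \sum_j \sum_k (c i k != c j k)%:R.
set A := \sum_i \sum_j \sum_k (c i k == c j k)%:R.
move=> hyp' hS hP K.
have hQ0 : Q - 1 != 0 by rewrite gt_eqF.
have hA : 2 * (Lr * N * tau - D * (tau - sig)) - N * W
          = N * Lr ^+ 2 * ((1 - e) ^+ 2 + e ^+ 2 / (Q - 1)).
  by rewrite De /W /tau /sig; field.
set G := 2 * e - Q * e ^+ 2 / (Q - 1).
have hG : Lr * Lr * N - N * Lr ^+ 2 * ((1 - e) ^+ 2 + e ^+ 2 / (Q - 1))
          = N * Lr ^+ 2 * G.
  by rewrite /G; field.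
have hPle : P <= N * Lr ^+ 2 * G by rewrite hP -hG; move: K; rewrite hA; lra.
have h2S : 2 * S <= Lr ^+ 2 * G.
  rewrite hS ler_pdivrMr //; apply: (le_trans hPle).
  by rewrite le_eqVlt; apply/orP; left; apply/eqP; ring.
have hLr0 : 0 < Lr by apply: lt_trans ltr01 hLr.
have h1 : delta * ('C(L, 2))%:R <= S by rewrite -ler_pdivlMr.
have h3 : delta * (Lr - 1) * Lr <= Lr * G * Lr.
  have -> : delta * (Lr - 1) * Lr = 2 * (delta * ('C(L, 2))%:R)
    by rewrite mulrCA hCb mulrA.
  have -> : Lr * G * Lr = Lr ^+ 2 * G by ring.
  by apply: le_trans h2S; lra.
have h4 : delta * (Lr - 1) <= Lr * G by rewrite -(ler_pM2r hLr0).
have -> : delta - delta / Lr = delta * (Lr - 1) / Lr.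
  by field; rewrite gt_eqF.
by rewrite ler_pdivrMr // [G * _]mulrC.
Qed.
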